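(* In the setting below, the minimizer $\theta_n^*=(\rho_n^*,\lambda_n^* )$ of the population dual loss $L_n(\cdot\,;\sigma^2,B)$ over $\Theta(\ell)$ satisfies, as $n\to\infty$, $$\|\lambda_{n,-1}^*\|_2=O\big(\lambda_{n,1}^*\ell^3+n^{-1}\big).$$ Consequently, for fixed $\delta,\epsilon\in(0,1)$, if $\hat B\ge \varepsilon_0>0$, there is a constant $C$ depending only on $\delta$, $B$ and $\varepsilon_0$ such that $$\sup_{\theta\,\in\,\Theta_n(\ell,\delta,\epsilon)} \big|L_n(\theta;\hat\sigma^2,\hat B)-L_n(\theta;\hat\sigma^2, B)\big|\le C\, \frac{(\lambda_{n,1}^* )^2}{n}\Big|\frac{1}{\hat B}-\frac{1}{B}\Big|,$$ where here $\theta_n^*=\theta_n^*(\hat\sigma^2,B)$ is used in the definition of $\Theta_n(\ell,\delta,\epsilon)$.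
   Context: Regression discontinuity setting with cutoff normalized to $c=0$: i.i.d. pairs $(X_i,Y_i)$, $W_i=\mathbf{1}\{X_i\ge 0\}$, the running variable has a strictly positive density at $0$; only observations with $|X_i|\le\ell$ are used, and $(X,W)$ denotes a generic draw of a retained running variable and its treatment indicator. For $\lambda=(\lambda_1,\dots,\lambda_6)$ write $\lambda_{-1}=(\lambda_2,\dots,\lambda_6)$. Dual parameter space: $\Theta(\ell)=\{(f,\lambda): f:[-\ell,\ell]\to\mathbb{R},\ f(0)=f'(0)=f''(0)=0,\ f''\text{ is }\lambda_1\text{-Lipschitz},\ \lambda\in[0,\infty)\times\mathbb{R}^5\}$. For $\theta=(\rho,\lambda)$ let $G(\theta;x,w)=\rho(x)+\lambda_2 w+\lambda_3(1-w)+\lambda_4 wx+\lambda_5(1-w)x+\lambda_6x^2$. Population dual loss: $L_n(\theta;\sigma^2,B)=\frac{1}{4\sigma^2}\mathbb{E}[G^2(\theta;X,W)]+\frac{\lambda_1^2}{4nB^2}+\frac{\lambda_2-\lambda_3}{n}$, with minimizer $\theta_n^*(\sigma^2,B)=(\rho_n^*,\lambda_n^* )$ over $\Theta(\ell)$. $\hat\sigma^2>0$, $\hat B>0$ are estimates computed independently of the sample and $B>0$ is a fixed constant. Neighborhood: $\Theta_n(\ell,\delta,\epsilon)=\{(\rho,\lambda)\in\Theta(\ell): |\lambda_1-\lambda^*_{n,1}|\le\delta\lambda^*_{n,1},\ \|\lambda_{-1}-\lambda^*_{n,-1}\|_2\le\epsilon\|\lambda^*_{n,-1}\|_2\}$.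 *)

(* Defs.v *)
From HB Require Import structures.
From mathcomp Require Import all_boot all_order all_algebra.
From mathcomp Require Import all_classical all_reals all_analysis.
Set Implicit Arguments. Unset Strict Implicit. Unset Printing Implicit Defensive.
Import Order.TTheory GRing.Theory Num.Theory.
Import numFieldNormedType.Exports.
Local Open Scope classical_set_scope.
Local Open Scope ring_scope.

Record dual_param (R : realType) := DualParam {
  rho : R -> R;
  lam1 : R; lam2 : R; lam3 : R; lam4 : R; lam5 : R; lam6 : R }.

(* Euclidean norm of lambda_{-1} = (lambda_2, ..., lambda_6). *)
Definition norm_lam_rest (R : realType) (t : dual_param R) : R :=
  Num.sqrt (lam2 t ^+ 2 + lam3 t ^+ 2 + lam4 t ^+ 2 + lam5 t ^+ 2 + lam6 t ^+ 2).

Definition treat (R : realType) (x : R) : R := if 0 <= x then 1 else 0.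

Definition Gfun (R : realType) (t : dual_param R) (x w : R) : R :=
  rho t x + lam2 t * w + lam3 t * (1 - w) + lam4 t * w * x
  + lam5 t * (1 - w) * x + lam6 t * x ^+ 2.

(* Membership in Theta(l): rho is (represented by a function on R which,
   restricted to [-l,l], is) twice differentiable with rho(0)=rho'(0)=rho''(0)=0,
   rho'' lambda_1-Lipschitz on [-l,l], and lambda_1 >= 0. *)
Definition in_Theta (R : realType) (l : R) (t : dual_param R) : Prop :=
  0 <= lam1 t /\
  (forall x : R, derivable (rho t) x 1) /\
  (forall x : R, derivable (derive1 (rho t)) x 1) /\
  rho t 0 = 0 /\ (derive1 (rho t)) 0 = 0 /\ (derive1 (derive1 (rho t))) 0 = 0 /\
  (forall x y : R, x \in `[-l, l] -> y \in `[-l, l] ->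
     `|(derive1 (derive1 (rho t))) x - (derive1 (derive1 (rho t))) y| <= lam1 t * `|x - y|).

Definition retained (R : realType) (l : R) : set R := [set x : R | `|x| <= l].

(* E[G^2(theta; X, W)] for a retained draw, i.e. X ~ P conditioned on |X| <= l. *)
Definition EG2 (R : realType) (l : R) (P : probability R R) (t : dual_param R) : R :=
  fine (\int[P]_(x in retained l) ((Gfun t x (treat x)) ^+ 2)%:E)%E
  / fine (P (retained l)).

Definition dual_loss (R : realType) (l : R) (P : probability R R) (n : nat)
  (t : dual_param R) (s2 B : R) : R :=
  EG2 l P t / (4 * s2) + lam1 t ^+ 2 / (4 * n%:R * B ^+ 2)
  + (lam2 t - lam3 t) / n%:R.

Definition is_minimizer (R : realType) (l : R) (P : probability R R) (n : nat)
  (s2 B : R) (t : dual_param R) : Prop :=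
  in_Theta l t /\
  forall t', in_Theta l t' -> dual_loss l P n t s2 B <= dual_loss l P n t' s2 B.

Definition in_nbhd (R : realType) (l delta eps : R) (tstar t : dual_param R) : Prop :=
  in_Theta l t /\
  `|lam1 t - lam1 tstar| <= delta * lam1 tstar /\
  Num.sqrt ((lam2 t - lam2 tstar) ^+ 2 + (lam3 t - lam3 tstar) ^+ 2
            + (lam4 t - lam4 tstar) ^+ 2 + (lam5 t - lam5 tstar) ^+ 2
            + (lam6 t - lam6 tstar) ^+ 2) <= eps * norm_lam_rest tstar.

Definition rv_law (R : realType) (P : probability R R) (p : R -> R) : Prop :=
  measurable_fun setT p /\ (forall x, 0 <= p x) /\
  (forall A : set R, measurable A ->
     (P A = \int[lebesgue_measure]_(x in A) (p x)%:E)%E) /\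
  {for 0, continuous p} /\ 0 < p 0.

(* Main.v *)
Require Import Defs.
From HB Require Import structures.
From mathcomp Require Import all_boot all_order all_algebra.
From mathcomp Require Import all_classical all_reals all_analysis.
Import Order.TTheory GRing.Theory Num.Theory.
Import numFieldNormedType.Exports.
Local Open Scope classical_set_scope.
Local Open Scope ring_scope.
From mathcomp Require Import measurable_realfun.
From mathcomp Require Import ring lra.

Lemma mvt_bound (R: realType) (f : R -> R) (K l : R) (k : nat) : 0 <= K ->
  (forall x, derivable f x 1) -> f 0 = 0 ->
  (forall x, `|x| <= l -> `|(derive1 f) x| <= K * `|x| ^+ k) ->
  forall x, `|x| <= l -> `|f x| <= K * `|x| ^+ k.+1.
Proof.
move=> K0 df f0 hb x hx.
have cont : forall a b : R, {within `[a, b], continuous f}.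
  by move=> a b; apply: derivable_within_continuous => y _; exact: df.
have isd : forall y, is_derive y (1:R) f ((derive1 f) y).
  by move=> y; rewrite derive1E; apply: derivableP; exact: df.
have hK : forall c, `|c| <= `|x| -> `|(derive1 f) c| <= K * `|x| ^+ k.
  move=> c hc; apply: le_trans (hb c (le_trans hc hx)) _.
  by apply: ler_wpM2l => //; apply: lerXn2r; rewrite ?nnegrE.
case: (ltgtP x 0) => [xlt|xgt|->]; last by rewrite f0 !normr0 expr0n /= mulr0.
- have [c /andP[] hc1 hc2 eq] := MVT xlt (fun y _ => isd y) (cont x 0).
  move: hc1 hc2; rewrite !bnd_simp => hc1 hc2.
  have : `|f x| = `|(derive1 f) c| * `|x|.
    by rewrite -[LHS]normrN -sub0r -{1}f0 eq normrM sub0r normrN.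
  move=> ->; rewrite exprS mulrCA [X in _ <= X]mulrC; apply: ler_wpM2r => //.
  by apply: hK; rewrite !ltr0_norm //; lra.
- have [c /andP[] hc1 hc2 eq] := MVT xgt (fun y _ => isd y) (cont 0 x).
  move: hc1 hc2; rewrite !bnd_simp => hc1 hc2.
  have : `|f x| = `|(derive1 f) c| * `|x|.
    by rewrite -[f x]subr0 -{1}f0 eq normrM subr0.
  move=> ->; rewrite exprS mulrCA [X in _ <= X]mulrC; apply: ler_wpM2r => //.
  by apply: hK; rewrite !gtr0_norm //; lra.
Qed.

Lemma rho_cont (R : realType) (l : R) t : in_Theta l t -> continuous (rho t).
Proof.
move=> [_ [df _]] x; apply: differentiable_continuous; apply/derivable1_diffP; exact: df.
Qed.

Lemma treat_meas (R : realType) : measurable_fun setT (@treat R).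
Proof.
rewrite /treat; apply: measurable_fun_ifT => //.
- apply: measurable_fun_ler => //; exact: measurable_id.
Qed.

Lemma G_meas (R : realType) (l : R) t : in_Theta l t ->
  measurable_fun setT (fun x => (Gfun t x (treat x)) ^+ 2).
Proof.
move=> ht; apply: measurable_funX; rewrite /Gfun.
have mT := @treat_meas R.
have mid : measurable_fun setT (@id R) by exact: measurable_id.
have m1T : measurable_fun setT (fun x : R => 1 - treat x).
  by apply: measurable_funB => //.
repeat apply: measurable_funD.
- by apply: continuous_measurable_fun; exact: rho_cont ht.
- by apply: measurable_funM.
- by apply: measurable_funM.
- by apply: measurable_funM => //; apply: measurable_funM.
- by apply: measurable_funM => //; apply: measurable_funM.
- by apply: measurable_funM => //; apply: measurable_funX.
Qed.

Lemma rho_bound (R : realType) (l : R) t : in_Theta l t ->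
  forall x, `|x| <= l -> `|rho t x| <= lam1 t * `|x| ^+ 3.
Proof.
move=> [l0 [df [ddf [r0 [r10 [r20 lip]]]]]].
have b2 : forall x, `|x| <= l -> `|derive1 (derive1 (rho t)) x| <= lam1 t * `|x| ^+ 1.
  move=> x hx.
  have hl : 0 <= l by exact: le_trans (normr_ge0 _) hx.
  have := lip x 0; rewrite r20 subr0 subr0 expr1; apply.
  - by rewrite in_itv /=; rewrite -ler_norml.
  - by rewrite in_itv /= oppr_le0 hl.
have b1 := @mvt_bound R _ _ l _ l0 ddf r10 b2.
exact: @mvt_bound R _ _ l _ l0 df r0 b1.
Qed.

Lemma retained_itv (R : realType) (l : R) : retained l = [set` `[-l, l]].
Proof.
by apply/seteqP; split => x /=; rewrite /retained /= in_itv /= ler_norml.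
Qed.

Lemma retained_meas (R : realType) (l : R) : measurable (retained l).
Proof. by rewrite retained_itv; exact: measurable_itv. Qed.

Lemma prob_fin (R : realType) (P : probability R R) (A : set R) :
  measurable A -> P A \is a fin_num.
Proof.
move=> mA; rewrite ge0_fin_numE //; apply: le_lt_trans (probability_le1 P mA) _.
exact: ltry.
Qed.

Lemma prob_fine_le1 (R : realType) (P : probability R R) (A : set R) :
  measurable A -> 0 <= fine (P A) <= 1.
Proof.
move=> mA; rewrite fine_ge0 //=.
rewrite -lee_fin fineK ?prob_fin //; exact: probability_le1.
Qed.

Lemma int_ub (R : realType) (P : probability R R) (l : R) (f : R -> R) (M : R) :
  measurable_fun setT f -> (forall x, retained l x -> 0 <= f x <= M) ->
  (\int[P]_(x in retained l) (f x)%:E <= (M * fine (P (retained l)))%:E)%E.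
Proof.
move=> mf hf.
have mr := @retained_meas R l.
apply: (@le_trans _ _ (\int[P]_(x in retained l) (cst M%:E) x)%E).
  apply: ge0_le_integral => //.
  - by move=> x /hf /andP[].
  - by apply/measurable_EFinP; exact: measurable_funTS.
  - by move=> x /hf /andP[].
rewrite integral_cst // EFinM fineK //; exact: prob_fin.
Qed.

Lemma int_fin (R : realType) (P : probability R R) (l : R) (f : R -> R) (M : R) :
  measurable_fun setT f -> (forall x, retained l x -> 0 <= f x <= M) ->
  (\int[P]_(x in retained l) (f x)%:E)%E \is a fin_num.
Proof.
move=> mf hf; rewrite ge0_fin_numE; last first.
  by apply: integral_ge0 => x /hf /andP[].
by apply: le_lt_trans (@int_ub _ P l f M mf hf) _; exact: ltry.
Qed.

Lemma int_lb (R : realType) (P : probability R R) (l : R) (f : R -> R) (M K : R) (J : set R) :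
  measurable_fun setT f -> (forall x, retained l x -> 0 <= f x <= M) ->
  measurable J -> J `<=` retained l -> 0 <= K -> (forall x, J x -> K <= f x) ->
  K * fine (P J) <= fine (\int[P]_(x in retained l) (f x)%:E)%E.
Proof.
move=> mf hf mJ sJ K0 hK.
have mr := @retained_meas R l.
have -> : K * fine (P J) = fine (K%:E * P J)%E.
  by rewrite fineM //; exact: prob_fin.
apply: fine_le; first by rewrite fin_numM // prob_fin.
  exact: (@int_fin _ P l f M mf hf).
rewrite -integral_cst //.
apply: (@le_trans _ _ (\int[P]_(x in J) (f x)%:E)%E); last first.
  apply: ge0_subset_integral => //.
  - by apply/measurable_EFinP; exact: measurable_funTS.
  - by move=> x /hf /andP[].
apply: ge0_le_integral => //.
- by apply/measurable_EFinP; exact: measurable_funTS.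
Qed.

Lemma dens_lb (R : realType) (P : probability R R) (p : R -> R) :
  rv_law P p -> exists2 d : R, 0 < d &
  forall u v : R, -d <= u -> u < v -> v <= d ->
    p 0 / 2 * (v - u) <= fine (P [set` `[u, v]]).
Proof.
move=> [mp [p0 [hP [cp pos]]]].
have e0 : 0 < p 0 / 2 by rewrite divr_gt0.
have := @cvgr_dist_lt _ _ _ (nbhs (0:R)) _ p (p 0) cp _ e0.
move=> h; have [d /= d0 hd] := proj1 (nbhs_ballP _ _) (h _).
exists (d / 2); first by rewrite divr_gt0.
move=> u v hu uv hv.
have hle : forall x, x \in `[u, v] -> p 0 / 2 <= p x.
  move=> x; rewrite in_itv /= => /andP[h1 h2].
  have : ball 0 d x.
    rewrite -ball_normE /= sub0r normrN ltr_norml; apply/andP; split; lra.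
  move=> /hd; rewrite ltr_norml => /andP[_ h3]; lra.
rewrite -lee_fin fineK; last exact: prob_fin (measurable_itv _).
rewrite hP; last exact: measurable_itv.
apply: (@le_trans _ _ (\int[lebesgue_measure]_(x in [set` `[u, v]]) (cst (p 0 / 2)%:E) x)%E).
  rewrite integral_cst; last exact: measurable_itv.
  have Hl : lebesgue_measure [set` `[u, v]] = (v - u)%:E.
    by rewrite lebesgue_measure_itv /= lte_fin uv EFinB.
  by rewrite [X in (_ <= _ * X)%E](_ : _ = (v - u)%:E) ?EFinM //; exact: Hl.
apply: ge0_le_integral => //.
- by move=> x _ /=; rewrite lee_fin ltW.
- by apply/measurable_EFinP; exact: measurable_funTS.
Qed.

Lemma interp_bound (R : realType) (a A B C T : R) : 0 < a <= 1 ->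
  `|A + B * (a / 4) + C * (a / 4) ^+ 2| <= T ->
  `|A + B * (a / 2) + C * (a / 2) ^+ 2| <= T ->
  `|A + B * (3 * a / 4) + C * (3 * a / 4) ^+ 2| <= T ->
  a ^+ 2 * (`|A| + `|B| + `|C|) <= 71 * T.
Proof.
move=> /andP[a0 a1].
move=> h1 h2 h3.
have e1 : A + B * (a / 4) + C * (a / 4) ^+ 2 = A + (B * a) / 4 + (C * a ^+ 2) / 16 by field.
have e2 : A + B * (a / 2) + C * (a / 2) ^+ 2 = A + (B * a) / 2 + (C * a ^+ 2) / 4 by field.
have e3 : A + B * (3 * a / 4) + C * (3 * a / 4) ^+ 2 = A + 3 * (B * a) / 4 + 9 * (C * a ^+ 2) / 16 by field.
move: h1 h2 h3; rewrite e1 e2 e3 !ler_norml => /andP[h1 h1'] /andP[h2 h2'] /andP[h3 h3'].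
set X := B * a in h1 h1' h2 h2' h3 h3' *; set Y := C * a ^+ 2 in h1 h1' h2 h2' h3 h3' *.
have hA : `|A| <= 7 * T by rewrite ler_norml; apply/andP; split; lra.
have hX : `|X| <= 32 * T by rewrite ler_norml; apply/andP; split; lra.
have hY : `|Y| <= 32 * T by rewrite ler_norml; apply/andP; split; lra.
have eX : `|X| = `|B| * a by rewrite /X normrM (gtr0_norm a0).
have eY : `|Y| = `|C| * a ^+ 2 by rewrite /Y normrM (ger0_norm (sqr_ge0 a)).
have nA := normr_ge0 A; have nB := normr_ge0 B; have nC := normr_ge0 C.
have a2 : a ^+ 2 <= a by rewrite expr2 ler_piMl // ltW.
have a21 : a ^+ 2 <= 1 by lra.
nra.
Qed.

Lemma poly_near (R : realType) (a A B C x0 x : R) : 0 < a <= 1 ->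
  a / 4 <= x0 <= 3 * a / 4 ->
  a ^+ 2 * (`|A| + `|B| + `|C|) / 71 <= `|A + B * x0 + C * x0 ^+ 2| ->
  `|x - x0| <= a ^+ 3 / 1200 ->
  a ^+ 2 * (`|A| + `|B| + `|C|) / 200 <= `|A + B * x + C * x ^+ 2|.
Proof.
move=> /andP[a0 a1] /andP[b1 b2] hq hx.
have a2 : a ^+ 2 <= a by rewrite expr2 ler_piMl // ltW.
have a3 : a ^+ 3 <= a ^+ 2 by rewrite exprS ler_piMl // ?exprn_ge0 // ltW.
have a3p : 0 <= a ^+ 3 by rewrite exprn_ge0 // ltW.
have a2p : 0 <= a ^+ 2 by rewrite exprn_ge0 // ltW.
move: hx; rewrite ler_norml => /andP[hx1 hx2].
have ex : (A + B * x0 + C * x0 ^+ 2) - (A + B * x + C * x ^+ 2)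
   = (x0 - x) * (B + C * (x + x0)) by ring.
have hd : `|(A + B * x0 + C * x0 ^+ 2) - (A + B * x + C * x ^+ 2)|
    <= a ^+ 3 / 1200 * (`|B| + 2 * `|C|).
  rewrite ex normrM; apply: ler_pM => //.
  - by rewrite distrC ler_norml; apply/andP; split; lra.
  - apply: le_trans (ler_normD _ _) _; apply: lerD => //.
    rewrite normrM; rewrite [X in _ * X <= _]ger0_norm; last lra.
    rewrite mulrC; apply: ler_wpM2r => //; lra.
have tri := ler_distD (A + B * x + C * x ^+ 2) (A + B * x0 + C * x0 ^+ 2) 0.
rewrite !subr0 distrC in tri.
have nB := normr_ge0 B; have nC := normr_ge0 C; have nA := normr_ge0 A.
have : a ^+ 3 * (`|B| + 2 * `|C|) <= a ^+ 2 * (2 * (`|A| + `|B| + `|C|)).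
  apply: le_trans (_ : a ^+ 2 * (`|B| + 2 * `|C|) <= _).
    by apply: ler_wpM2r => //; lra.
  by apply: ler_wpM2l => //; lra.
move=> h.
rewrite distrC in hd.
nra.
Qed.

Lemma poly_lb (R : realType) (a A B C : R) : 0 < a <= 1 ->
  exists x0, (x0 = a / 4 \/ x0 = a / 2 \/ x0 = 3 * a / 4) /\
   forall x, `|x - x0| <= a ^+ 3 / 1200 ->
   a ^+ 2 * (`|A| + `|B| + `|C|) / 200 <= `|A + B * x + C * x ^+ 2|.
Proof.
move=> ha; have /andP[a0 a1] := ha.
set T := a ^+ 2 * (`|A| + `|B| + `|C|) / 71.
case: (leP T `|A + B * (a / 4) + C * (a / 4) ^+ 2|) => h1.
  exists (a / 4); split; first by left.
  by move=> x; apply: poly_near => //; apply/andP; split; lra.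
case: (leP T `|A + B * (a / 2) + C * (a / 2) ^+ 2|) => h2.
  exists (a / 2); split; first by right; left.
  by move=> x; apply: poly_near => //; apply/andP; split; lra.
case: (leP T `|A + B * (3 * a / 4) + C * (3 * a / 4) ^+ 2|) => h3.
  exists (3 * a / 4); split; first by right; right.
  by move=> x; apply: poly_near => //; apply/andP; split; lra.
set M := Num.max `|A + B * (a / 4) + C * (a / 4) ^+ 2|
  (Num.max `|A + B * (a / 2) + C * (a / 2) ^+ 2|
     `|A + B * (3 * a / 4) + C * (3 * a / 4) ^+ 2|).
have hb : a ^+ 2 * (`|A| + `|B| + `|C|) <= 71 * M.
  by apply: interp_bound => //; rewrite /M !le_max !lexx ?orbT.
have hM : M < T by rewrite /M !gt_max h1 h2 h3.
move: hM hb; rewrite /T => hM hb; exfalso.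
have : 0 <= a ^+ 2 * (`|A| + `|B| + `|C|).
  by rewrite mulr_ge0 ?exprn_ge0 ?addr_ge0 // ltW.
lra.
Qed.

Lemma EG2_ub (R : realType) (l : R) (P : probability R R) t (M : R) :
  in_Theta l t -> 0 <= M ->
  (forall x, retained l x -> Gfun t x (treat x) ^+ 2 <= M) -> EG2 l P t <= M.
Proof.
move=> ht M0 hM.
have hf : forall x, retained l x -> 0 <= Gfun t x (treat x) ^+ 2 <= M.
  by move=> x hx; rewrite sqr_ge0 hM.
have mr := @retained_meas R l.
have := @int_ub _ P l _ M (@G_meas R l t ht) hf.
move=> /(fine_le (@int_fin _ P l _ M (@G_meas R l t ht) hf)).
rewrite /= => /(_ isT) h.
rewrite /EG2.
have [/andP[Pr0 Pr1]] := @prob_fine_le1 R P _ mr.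
case: (ltgtP (fine (P (retained l))) 0) => [|hP|->]; first by rewrite ltNge Pr0.
  by rewrite ler_pdivrMr.
by rewrite invr0 mulr0.
Qed.

Lemma EG2_lb (R : realType) (l : R) (P : probability R R) t (M K : R) (J : set R) :
  in_Theta l t ->
  (forall x, retained l x -> Gfun t x (treat x) ^+ 2 <= M) ->
  measurable J -> J `<=` retained l -> 0 <= K ->
  (forall x, J x -> K <= Gfun t x (treat x) ^+ 2) ->
  0 < fine (P (retained l)) ->
  K * fine (P J) <= EG2 l P t.
Proof.
move=> ht hM mJ sJ K0 hK Pr0.
have hf : forall x, retained l x -> 0 <= Gfun t x (treat x) ^+ 2 <= M.
  by move=> x hx; rewrite sqr_ge0 hM.
have mr := @retained_meas R l.
have h := @int_lb _ P l _ M K J (@G_meas R l t ht) hf mJ sJ K0 hK.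
have [/andP[_ Pr1]] := @prob_fine_le1 R P _ mr.
have i0 : 0 <= fine (\int[P]_(x in retained l) (Gfun t x (treat x) ^+ 2)%:E)%E.
  by apply: fine_ge0; apply: integral_ge0 => x _; rewrite lee_fin sqr_ge0.
rewrite /EG2; apply: le_trans h _.
rewrite ler_pdivlMr //.
by rewrite ler_piMr.
Qed.

Lemma G_pos (R : realType) t (x : R) : 0 <= x ->
  Gfun t x (treat x) = rho t x + (lam2 t + lam4 t * x + lam6 t * x ^+ 2).
Proof. by move=> hx; rewrite /Gfun /treat hx; ring. Qed.

Lemma G_neg (R : realType) t (x : R) : x < 0 ->
  Gfun t x (treat x) = rho t x + (lam3 t + (- lam5 t) * (- x) + lam6 t * (- x) ^+ 2).
Proof. by move=> hx; rewrite /Gfun /treat leNgt hx /=; ring. Qed.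

Lemma quad_norm (R : realType) (c b e y : R) :
  `|c + b * y + e * y ^+ 2| <= (`|c| + `|b| + `|e|) * (1 + `|y|) ^+ 2.
Proof.
apply: le_trans (ler_normD _ _) _.
apply: le_trans (lerD (ler_normD _ _) (lexx _)) _.
rewrite !normrM ?normrX ?real_normK /=.
have := normr_ge0 c; have := normr_ge0 b; have := normr_ge0 e; have := normr_ge0 y.
move=> h1 h2 h3 h4; nra.
Qed.

Lemma rho_le (R : realType) (l : R) t x : in_Theta l t -> `|x| <= l ->
  `|rho t x| <= lam1 t * l ^+ 3.
Proof.
move=> ht hx; apply: le_trans (@rho_bound R l t ht x hx) _.
apply: ler_wpM2l; first by case: ht.
by apply: lerXn2r; rewrite ?nnegrE //; exact: le_trans (normr_ge0 _) hx.
Qed.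

Lemma G_bound (R : realType) (l : R) t x : in_Theta l t -> retained l x ->
  `|Gfun t x (treat x)| <=
    lam1 t * l ^+ 3 + (`|lam2 t| + `|lam3 t| + `|lam4 t| + `|lam5 t| + `|lam6 t|) * (1 + l) ^+ 2.
Proof.
move=> ht hx; rewrite /retained /= in hx.
have hr := @rho_le R l t x ht hx.
have l0 : 0 <= l by exact: le_trans (normr_ge0 _) hx.
have hl : (1 + `|x|) ^+ 2 <= (1 + l) ^+ 2.
  by apply: lerXn2r; rewrite ?nnegrE ?addr_ge0 // lerD2l.
have := normr_ge0 (lam2 t); have := normr_ge0 (lam3 t); have := normr_ge0 (lam4 t).
have := normr_ge0 (lam5 t); have := normr_ge0 (lam6 t).
move=> h6 h5 h4 h3 h2.
have hl0 : 0 <= (1 + `|x|) ^+ 2 by rewrite exprn_ge0 // addr_ge0.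
case: (leP 0 x) => hx0.
- rewrite G_pos //; apply: le_trans (ler_normD _ _) _.
  have := @quad_norm R (lam2 t) (lam4 t) (lam6 t) x.
  move=> hq; apply: lerD => //; apply: le_trans hq _.
  apply: le_trans (_ : (`|lam2 t| + `|lam4 t| + `|lam6 t|) * (1 + l) ^+ 2 <= _).
    by apply: ler_wpM2l => //; lra.
  by apply: ler_wpM2r; rewrite ?exprn_ge0 ?addr_ge0 //; lra.
- rewrite G_neg //; apply: le_trans (ler_normD _ _) _.
  have := @quad_norm R (lam3 t) (- lam5 t) (lam6 t) (- x).
  rewrite !normrN => hq; apply: lerD => //; apply: le_trans hq _.
  apply: le_trans (_ : (`|lam3 t| + `|lam5 t| + `|lam6 t|) * (1 + l) ^+ 2 <= _).
    by apply: ler_wpM2l => //; lra.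
  by apply: ler_wpM2r; rewrite ?exprn_ge0 ?addr_ge0 //; lra.
Qed.

Lemma quad_solve (R : realType) (S r al q : R) : 0 <= S -> 0 <= r -> 0 <= al -> 0 <= q ->
  S ^+ 2 <= al * r ^+ 2 + q * S -> S <= (1 + al) * r + q.
Proof.
move=> S0 r0 a0 q0 h; rewrite leNgt; apply/negP => hlt.
have h1 : ((1 + al) * r + q) * S < S * S.
  by rewrite ltr_pM2r //; apply: le_lt_trans hlt; rewrite addr_ge0 ?mulr_ge0 ?addr_ge0.
have h2 : (1 + al) * r * ((1 + al) * r) <= (1 + al) * r * S.
  by apply: ler_wpM2l; [rewrite mulr_ge0 ?addr_ge0 | lra].
have h3 : al * r ^+ 2 <= (1 + al) * r * ((1 + al) * r).
  have : 0 <= r ^+ 2 * (1 + al + al ^+ 2) by rewrite mulr_ge0 ?exprn_ge0 // ?addr_ge0 ?exprn_ge0.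
  move=> hh; rewrite -subr_ge0; apply: le_trans hh _; rewrite le_eqVlt; apply/orP; left; apply/eqP; ring.
rewrite expr2 in h; lra.
Qed.

Lemma norm_le_sum (R : realType) (t : dual_param R) :
  norm_lam_rest t <= `|lam2 t| + `|lam3 t| + `|lam4 t| + `|lam5 t| + `|lam6 t|.
Proof.
rewrite /norm_lam_rest.
have := normr_ge0 (lam2 t); have := normr_ge0 (lam3 t); have := normr_ge0 (lam4 t).
have := normr_ge0 (lam5 t); have := normr_ge0 (lam6 t).
move=> h6 h5 h4 h3 h2.
set s := _ + _ + _ + _ + `|lam6 t|.
have s0 : 0 <= s by rewrite /s; lra.
rewrite -(ger0_norm s0) -sqrtr_sqr ler_sqrt ?exprn_ge0 //.
rewrite -(real_normK (num_real (lam2 t))) -(real_normK (num_real (lam3 t))).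
rewrite -(real_normK (num_real (lam4 t))) -(real_normK (num_real (lam5 t))).
rewrite -(real_normK (num_real (lam6 t))) /s; nra.
Qed.

Lemma p2alg (R : realType) (E a c n Bh B : R) : 0 < n -> 0 < Bh -> 0 < B ->
  (E + a / (4 * n * Bh ^+ 2) + c) - (E + a / (4 * n * B ^+ 2) + c)
  = a / (4 * n) * ((Bh^-1 - B^-1) * (Bh^-1 + B^-1)).
Proof. move=> hn hb hB. field. by rewrite !gt_eqF. Qed.

Lemma part2 (R : realType) :
  (forall delta B eps0 : R, 0 < delta < 1 -> 0 < B -> 0 < eps0 ->
     exists C : R,
       forall (eps l : R) (P : probability R R) (p : R -> R),
         0 < eps < 1 -> 0 < l -> rv_law P p ->
         forall s2h Bh : R, 0 < s2h -> eps0 <= Bh ->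
         forall n : nat, (0 < n)%N ->
         forall tstar : dual_param R, is_minimizer l P n s2h B tstar ->
         forall t : dual_param R, in_nbhd l delta eps tstar t ->
           `|dual_loss l P n t s2h Bh - dual_loss l P n t s2h B|
             <= C * (lam1 tstar ^+ 2 / n%:R) * `|Bh^-1 - B^-1|).
Proof.
move=> delta B eps0 /andP[d0 d1] B0 e0.
exists ((1 + delta) ^+ 2 * (eps0^-1 + B^-1) / 4).
move=> eps l P p _ _ _ s2h Bh _ hBh n n0 tstar [[ls0 _] _] t [[lt0 _] [hl _]].
have Bh0 : 0 < Bh by exact: lt_le_trans e0 hBh.
have nR : 0 < n%:R :> R by rewrite ltr0n.
rewrite /dual_loss p2alg //.
set u := Bh^-1 - B^-1.
have hi : Bh^-1 <= eps0^-1 by rewrite lef_pV2 ?posrE.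
have Bi : 0 < B^-1 by rewrite invr_gt0.
have Bhi : 0 < Bh^-1 by rewrite invr_gt0.
have ni : 0 < n%:R^-1 :> R by rewrite invr_gt0.
have hl1 : lam1 t <= (1 + delta) * lam1 tstar.
  by move: hl; rewrite ler_norml => /andP[_ h]; lra.
have hl2 : lam1 t ^+ 2 <= (1 + delta) ^+ 2 * lam1 tstar ^+ 2.
  by rewrite -exprMn; apply: lerXn2r; rewrite ?nnegrE ?mulr_ge0 //; lra.
rewrite normrM [`|u * _|]normrM (ger0_norm (_ : 0 <= Bh^-1 + B^-1)); last lra.
rewrite ger0_norm; last by rewrite divr_ge0 ?mulr_ge0 ?exprn_ge0 // ltW.
have u0 := normr_ge0 u.
have L0 : 0 <= lam1 t ^+ 2 by rewrite exprn_ge0.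
have e1 : lam1 t ^+ 2 / (4 * n%:R) * (`|u| * (Bh^-1 + B^-1))
  = (lam1 t ^+ 2 * (Bh^-1 + B^-1)) * (n%:R^-1 * `|u| / 4).
  by set N := n%:R; rewrite invfM; ring.
have e2 : (1 + delta) ^+ 2 * (eps0^-1 + B^-1) / 4 * (lam1 tstar ^+ 2 / n%:R) * `|u|
  = ((1 + delta) ^+ 2 * lam1 tstar ^+ 2 * (eps0^-1 + B^-1)) * (n%:R^-1 * `|u| / 4).
  by set N := n%:R; ring.
rewrite e1 e2; apply: ler_wpM2r; first by rewrite divr_ge0 ?mulr_ge0 // ltW.
apply: ler_pM => //; lra.
Qed.

Lemma key_pt (R : realType) (rh q r k : R) : 0 <= k -> `|rh| <= r -> k <= `|q| ->
  Num.max 0 (k ^+ 2 / 2 - r ^+ 2) <= (rh + q) ^+ 2.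
Proof.
move=> k0 hr hk.
have q2 : k ^+ 2 <= q ^+ 2.
  by rewrite -(real_normK (num_real q)); apply: lerXn2r; rewrite ?nnegrE.
have r2 : rh ^+ 2 <= r ^+ 2.
  rewrite -(real_normK (num_real rh)); apply: lerXn2r; rewrite ?nnegrE //.
  exact: le_trans (normr_ge0 _) hr.
rewrite ge_max; apply/andP; split; first exact: sqr_ge0.
have : 0 <= (2 * rh + q) ^+ 2 by exact: sqr_ge0.
nra.
Qed.

Lemma ub_alg (R : realType) (X Y c s2 n l2 l3 Z : R) : 0 < s2 -> 0 < n ->
  l3 - l2 <= Z ->
  X / (4 * s2) + c + (l2 - l3) / n <= Y / (4 * s2) + c ->
  X <= Y + Z * n^-1 * (4 * s2).
Proof.
move=> s0 n0 hZ hle.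
have hS : - ((l2 - l3) / n) <= Z * n^-1.
  rewrite -mulNr opprB; apply: ler_wpM2r => //; rewrite invr_ge0; exact: ltW.
have h4 : 0 < 4 * s2 by apply: mulr_gt0 => //; lra.
have : (X - Y) / (4 * s2) <= Z * n^-1 by rewrite mulrBl; lra.
rewrite ler_pdivrMr // => h; lra.
Qed.

Lemma lowEG (R : realType) (l a w pw M : R) (P : probability R R) (t : dual_param R) :
  in_Theta l t -> 0 < a <= 1 -> w = a ^+ 3 / 1200 ->
  (forall x, retained l x -> Gfun t x (treat x) ^+ 2 <= M) ->
  0 < fine (P (retained l)) ->
  (forall x0, a / 4 <= x0 <= 3 * a / 4 ->
     pw <= fine (P [set` `[x0 - w, x0 + w]]) /\ [set` `[x0 - w, x0 + w]] `<=` retained l) ->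
  (forall x0, a / 4 <= x0 <= 3 * a / 4 ->
     pw <= fine (P [set` `[- x0 - w, - x0 + w]]) /\
     [set` `[- x0 - w, - x0 + w]] `<=` retained l) ->
  Num.max 0 ((a ^+ 2 * (`|lam2 t| + `|lam3 t| + `|lam4 t| + `|lam5 t| + `|lam6 t|) / 400) ^+ 2 / 2
             - (lam1 t * l ^+ 3) ^+ 2) * pw <= EG2 l P t.
Proof.
move=> ht a01 ew hM Pr0 hJp hJn.
have /andP[a0 a1] := a01.
set S := _ + _ + _ + _ + `|lam6 t|.
set r := lam1 t * l ^+ 3.
set k := a ^+ 2 * S / 400.
set K := Num.max _ _.
have K0 : 0 <= K by rewrite /K le_max lexx.
have n2 := normr_ge0 (lam2 t); have n3 := normr_ge0 (lam3 t).
have n4 := normr_ge0 (lam4 t); have n5 := normr_ge0 (lam5 t).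
have n6 := normr_ge0 (lam6 t).
have a2 : 0 <= a ^+ 2 by rewrite exprn_ge0 // ltW.
have k0 : 0 <= k by rewrite /k; apply: mulr_ge0; [apply: mulr_ge0 => //; rewrite /S; lra | rewrite invr_ge0 ler0n].
have a3p : 0 < a ^+ 3 by rewrite exprn_gt0.
have w0 : 0 < w by rewrite ew; lra.
have a3 : a ^+ 3 <= a by apply: ler_iXnr => //; exact: ltW.
have wa : w <= a / 1200 by rewrite ew; lra.
case: (leP (`|lam3 t| + `|lam5 t| + `|lam6 t|) (`|lam2 t| + `|lam4 t| + `|lam6 t|)) => side.
- have [x0 [hx0 hq]] := @poly_lb R a (lam2 t) (lam4 t) (lam6 t) a01.
  have hx0' : a / 4 <= x0 <= 3 * a / 4.
    by case: hx0 => [->|[->|->]]; apply/andP; split; lra.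
  have [hP hsub] := hJp x0 hx0'.
  apply: le_trans (_ : K * fine (P [set` `[x0 - w, x0 + w]]) <= _).
    exact: ler_wpM2l.
  apply: (@EG2_lb R l P t M K _ ht hM (measurable_itv _) hsub K0 _ Pr0).
  move=> x /= hJ; have := hsub x hJ; move: hJ; rewrite in_itv /= => /andP[h1 h2] hr.
  rewrite G_pos; last lra.
  apply: key_pt => //; first exact: (@rho_le R l t x ht hr).
  have hqx : a ^+ 2 * (`|lam2 t| + `|lam4 t| + `|lam6 t|) / 200
      <= `|lam2 t + lam4 t * x + lam6 t * x ^+ 2|.
    by apply: hq; rewrite ler_norml; apply/andP; split; lra.
  apply: le_trans hqx; rewrite /k /S.
  have : a ^+ 2 * (`|lam2 t| + `|lam3 t| + `|lam4 t| + `|lam5 t| + `|lam6 t|)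
       <= a ^+ 2 * (2 * (`|lam2 t| + `|lam4 t| + `|lam6 t|)).
    by apply: ler_wpM2l => //; lra.
  lra.
- have [x0 [hx0 hq]] := @poly_lb R a (lam3 t) (- lam5 t) (lam6 t) a01.
  have hx0' : a / 4 <= x0 <= 3 * a / 4.
    by case: hx0 => [->|[->|->]]; apply/andP; split; lra.
  have [hP hsub] := hJn x0 hx0'.
  apply: le_trans (_ : K * fine (P [set` `[- x0 - w, - x0 + w]]) <= _).
    exact: ler_wpM2l.
  apply: (@EG2_lb R l P t M K _ ht hM (measurable_itv _) hsub K0 _ Pr0).
  move=> x /= hJ; have := hsub x hJ; move: hJ; rewrite in_itv /= => /andP[h1 h2] hr.
  rewrite G_neg; last lra.
  apply: key_pt => //; first exact: (@rho_le R l t x ht hr).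
  have hqx : a ^+ 2 * (`|lam3 t| + `|- lam5 t| + `|lam6 t|) / 200
      <= `|lam3 t + (- lam5 t) * (- x) + lam6 t * (- x) ^+ 2|.
    by apply: hq; rewrite ler_norml; apply/andP; split; lra.
  rewrite normrN in hqx.
  apply: le_trans hqx; rewrite /k /S.
  have : a ^+ 2 * (`|lam2 t| + `|lam3 t| + `|lam4 t| + `|lam5 t| + `|lam6 t|)
       <= a ^+ 2 * (2 * (`|lam3 t| + `|lam5 t| + `|lam6 t|)).
    by apply: ler_wpM2l => //; lra.
  lra.
Qed.

Lemma final_alg (R : realType) (a pw S r ni s2 E : R) :
  0 < a -> 0 < pw -> 0 <= S -> 0 <= r -> 0 < ni -> 0 < s2 ->
  Num.max 0 ((a ^+ 2 * S / 400) ^+ 2 / 2 - r ^+ 2) * pw <= E ->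
  E <= r ^+ 2 + S * ni * (4 * s2) ->
  S <= (1 + (1 + pw) / (a ^+ 4 * pw / (2 * 400 ^+ 2))
           + 4 * s2 / (a ^+ 4 * pw / (2 * 400 ^+ 2))) * (r + ni).
Proof.
move=> a0 pw0 S0 r0 ni0 s0 h1 h2.
set c0 := a ^+ 4 * pw / (2 * 400 ^+ 2).
have a4 : 0 < a ^+ 4 by rewrite exprn_gt0.
have c400 : 0 < 2 * 400 ^+ 2 :> R by rewrite mulr_gt0 ?exprn_gt0 ?ltr0n.
have c00 : 0 < c0 by rewrite /c0; apply: mulr_gt0; [exact: mulr_gt0 | rewrite invr_gt0].
have hm : ((a ^+ 2 * S / 400) ^+ 2 / 2 - r ^+ 2) * pw
    <= Num.max 0 ((a ^+ 2 * S / 400) ^+ 2 / 2 - r ^+ 2) * pw.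
  by apply: ler_wpM2r; [exact: ltW | rewrite le_max lexx orbT].
have e1 : ((a ^+ 2 * S / 400) ^+ 2 / 2 - r ^+ 2) * pw = c0 * S ^+ 2 - r ^+ 2 * pw.
  by rewrite /c0; field.
have hc : c0 * S ^+ 2 <= (1 + pw) * r ^+ 2 + (4 * s2 * ni) * S.
  have : c0 * S ^+ 2 - r ^+ 2 * pw <= r ^+ 2 + S * ni * (4 * s2).
    by rewrite -e1; apply: le_trans hm _; apply: le_trans h1 h2.
  have -> : (1 + pw) * r ^+ 2 + (4 * s2 * ni) * S
          = r ^+ 2 + S * ni * (4 * s2) + r ^+ 2 * pw by ring.
  lra.
set alp := (1 + pw) / c0.
set bet := 4 * s2 / c0.
have alp0 : 0 <= alp by rewrite /alp; apply: divr_ge0; [lra | exact: ltW].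
have bet0 : 0 <= bet by rewrite /bet; apply: divr_ge0; [lra | exact: ltW].
have hq : S ^+ 2 <= alp * r ^+ 2 + (bet * ni) * S.
  rewrite -(ler_pM2l c00).
  have -> : c0 * (alp * r ^+ 2 + bet * ni * S) = (1 + pw) * r ^+ 2 + (4 * s2 * ni) * S.
    by rewrite /alp /bet; field; rewrite gt_eqF.
  exact: hc.
have := @quad_solve R S r alp (bet * ni) S0 r0 alp0 (mulr_ge0 bet0 (ltW ni0)) hq.
move=> h.
apply: le_trans h _.
have : 0 <= alp * ni by rewrite mulr_ge0 // ltW.
have : 0 <= bet * r by rewrite mulr_ge0.
nra.
Qed.

Lemma part1 (R : realType) :
  (forall (l : R) (P : probability R R) (p : R -> R),
     0 < l -> rv_law P p ->
     forall s2 B : R, 0 < s2 -> 0 < B ->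
     forall tstar : nat -> dual_param R,
       (forall n : nat, (0 < n)%N -> is_minimizer l P n s2 B (tstar n)) ->
       exists C : R, exists N : nat, forall n : nat, (N <= n)%N ->
         norm_lam_rest (tstar n)
           <= C * (lam1 (tstar n) * l ^+ 3 + n%:R^-1)).
Proof.
move=> l P p l0 law s2 B s0 B0 tstar hmin.
have [d d0 hd] := @dens_lb R P p law.
have p0 : 0 < p 0 by case: law => _ [_ [_ []]].
set a := Num.min l (Num.min d 1).
have a0 : 0 < a by rewrite /a !lt_min l0 d0 ltr01.
have al : a <= l by rewrite /a ge_min lexx.
have ad : a <= d by rewrite /a !ge_min lexx orbT.
have a1 : a <= 1 by rewrite /a !ge_min lexx !orbT.
have a01 : 0 < a <= 1 by rewrite a0 a1.
set w := a ^+ 3 / 1200.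
have a3 : a ^+ 3 <= a.
  by apply: ler_iXnr => //; exact: ltW.
have a3p : 0 < a ^+ 3 by rewrite exprn_gt0.
have w0 : 0 < w by rewrite /w; lra.
have wa : w <= a / 1200 by rewrite /w; lra.
have ew : w = a ^+ 3 / 1200 by [].
clearbody a w.
set pw := p 0 / 2 * (2 * w).
have pw0 : 0 < pw.
  rewrite /pw; apply: mulr_gt0; [lra | lra].
have hJp : forall x0, a / 4 <= x0 <= 3 * a / 4 ->
    pw <= fine (P [set` `[x0 - w, x0 + w]]).
  move=> x0 /andP[h1 h2].
  have := hd (x0 - w) (x0 + w); rewrite /pw.
  have -> : x0 + w - (x0 - w) = 2 * w by ring.
  apply; lra.
have hJn : forall x0, a / 4 <= x0 <= 3 * a / 4 ->
    pw <= fine (P [set` `[- x0 - w, - x0 + w]]).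
  move=> x0 /andP[h1 h2].
  have := hd (- x0 - w) (- x0 + w); rewrite /pw.
  have -> : - x0 + w - (- x0 - w) = 2 * w by ring.
  apply; lra.
have mr := @retained_meas R l.
have Jp_sub : forall x0, a / 4 <= x0 <= 3 * a / 4 ->
    [set` `[x0 - w, x0 + w]] `<=` retained l.
  move=> x0 /andP[h1 h2] x /=; rewrite in_itv /= => /andP[h3 h4].
  rewrite /retained /= ler_norml; apply/andP; split; lra.
have Jn_sub : forall x0, a / 4 <= x0 <= 3 * a / 4 ->
    [set` `[- x0 - w, - x0 + w]] `<=` retained l.
  move=> x0 /andP[h1 h2] x /=; rewrite in_itv /= => /andP[h3 h4].
  rewrite /retained /= ler_norml; apply/andP; split; lra.
have Pr0 : 0 < fine (P (retained l)).
  have hx0 : a / 4 <= a / 4 <= 3 * a / 4 by apply/andP; split; lra.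
  apply: lt_le_trans pw0 _; apply: le_trans (hJp _ hx0) _.
  apply: fine_le; rewrite ?prob_fin //.
  apply: le_measure; rewrite ?inE //; exact: Jp_sub.
set c0 := a ^+ 4 * pw / (2 * 400 ^+ 2).
have a4 : 0 < a ^+ 4 by rewrite exprn_gt0.
have c00 : 0 < c0.
  rewrite /c0; apply: mulr_gt0; first exact: mulr_gt0.
  by rewrite invr_gt0 mulr_gt0 ?exprn_gt0 ?ltr0n.
set alp := (1 + pw) / c0.
set bet := 4 * s2 / c0.
have alp0 : 0 <= alp by rewrite /alp; apply: divr_ge0; [lra | exact: ltW].
have bet0 : 0 <= bet by rewrite /bet; apply: divr_ge0; [lra | exact: ltW].
exists (1 + alp + bet), 1%N => n hn.
have [ht hmt] := hmin n hn.
move: (tstar n) ht hmt => t ht hmt.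
have l10 : 0 <= lam1 t by case: ht.
set r := lam1 t * l ^+ 3.
have r0 : 0 <= r by rewrite /r mulr_ge0 // exprn_ge0 // ltW.
set S := `|lam2 t| + `|lam3 t| + `|lam4 t| + `|lam5 t| + `|lam6 t|.
have n2 := normr_ge0 (lam2 t); have n3 := normr_ge0 (lam3 t).
have n4 := normr_ge0 (lam4 t); have n5 := normr_ge0 (lam5 t).
have n6 := normr_ge0 (lam6 t).
have S0 : 0 <= S by rewrite /S; lra.
have nR : 0 < n%:R :> R by rewrite ltr0n.
set ni := n%:R^-1 : R.
have ni0 : 0 < ni by rewrite /ni invr_gt0.
pose t' := DualParam (rho t) (lam1 t) 0 0 0 0 0.
have ht' : in_Theta l t' by exact: ht.
have hle := hmt t' ht'.
have ub' : EG2 l P t' <= r ^+ 2.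
  apply: (@EG2_ub R l P t' (r ^+ 2) ht'); first exact: sqr_ge0.
  move=> x hx.
  have -> : Gfun t' x (treat x) = rho t x by rewrite /Gfun /=; ring.
  rewrite -(real_normK (num_real _)); apply: lerXn2r; rewrite ?nnegrE //.
  exact: (@rho_le R l t x ht hx).
have hS : lam3 t - lam2 t <= S.
  have := ler_norm (lam3 t); have := ler_norm (- lam2 t); rewrite normrN /S; lra.
have ubt : EG2 l P t <= r ^+ 2 + S * ni * (4 * s2).
  move: hle; rewrite /dual_loss /= subrr mul0r addr0 => hle.
  apply: le_trans (@ub_alg R _ _ _ s2 n%:R _ _ S s0 nR hS hle) _.
  by apply: lerD; [exact: ub' | exact: lexx].
have hM : forall x, retained l x -> Gfun t x (treat x) ^+ 2 <= (r + S * (1 + l) ^+ 2) ^+ 2.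
  move=> x hx; rewrite -(real_normK (num_real _)); apply: lerXn2r; rewrite ?nnegrE //.
    by apply: addr_ge0 => //; rewrite mulr_ge0 // exprn_ge0 // addr_ge0 // ltW.
  exact: (@G_bound R l t x ht hx).
have low := @lowEG R l a w pw _ P t ht a01 ew hM Pr0
  (fun x0 h => conj (hJp x0 h) (Jp_sub x0 h)) (fun x0 h => conj (hJn x0 h) (Jn_sub x0 h)).
apply: le_trans (@norm_le_sum R t) _.
exact: (@final_alg R a pw S r ni s2 (EG2 l P t) a0 pw0 S0 r0 ni0 s0 low ubt).
Qed.
Theorem lemma5 (R : realType) :
  (* Part 1: ||lambda*_{n,-1}||_2 = O(lambda*_{n,1} l^3 + 1/n) as n -> oo. *)
  (forall (l : R) (P : probability R R) (p : R -> R),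
     0 < l -> rv_law P p ->
     forall s2 B : R, 0 < s2 -> 0 < B ->
     forall tstar : nat -> dual_param R,
       (forall n : nat, (0 < n)%N -> is_minimizer l P n s2 B (tstar n)) ->
       exists C : R, exists N : nat, forall n : nat, (N <= n)%N ->
         norm_lam_rest (tstar n)
           <= C * (lam1 (tstar n) * l ^+ 3 + n%:R^-1))
  /\
  (* Part 2: the sup bound, with C depending only on delta, B, eps0. *)
  (forall delta B eps0 : R, 0 < delta < 1 -> 0 < B -> 0 < eps0 ->
     exists C : R,
       forall (eps l : R) (P : probability R R) (p : R -> R),
         0 < eps < 1 -> 0 < l -> rv_law P p ->
         forall s2h Bh : R, 0 < s2h -> eps0 <= Bh ->
         forall n : nat, (0 < n)%N ->
         forall tstar : dual_param R, is_minimizer l P n s2h B tstar ->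
         forall t : dual_param R, in_nbhd l delta eps tstar t ->
           `|dual_loss l P n t s2h Bh - dual_loss l P n t s2h B|
             <= C * (lam1 tstar ^+ 2 / n%:R) * `|Bh^-1 - B^-1|).
Proof.
split; [exact: part1 | exact: part2].
Qed.
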